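(* Let $p$ be an odd prime, $\omega=e^{2\pi i/p}$, $m\ge1$, $Q=T_{(p^m)}$ and $K=K_Q(p)$. Let $M=S_\xi X^b$ and $M'=S_{\xi'}X^{b'}$ be elements of $K$ (with $S_\xi,S_{\xi'}\in Q$, $b,b'\in\mathbb{Z}_p$) such that $[M,M']=\omega^c\mathbbm{1}$ for some $c\in\mathbb{Z}_p$. Then: (1) if $b=b'=0$, then $c=0$; (2) if $b\neq0$, then $M'=S_{\chi'}M^{b'/b}$ where $\chi'(q)=\omega^{\alpha'_0+\alpha'_1q}$ for some $\alpha'_0,\alpha'_1\in\mathbb{Z}_p$, and $c=-b\alpha'_1$; (3) if $b'\neq0$, then $M=S_\chi M'^{\,b/b'}$ where $\chi(q)=\omega^{\alpha_0+\alpha_1q}$ for some $\alpha_0,\alpha_1\in\mathbb{Z}_p$, and $c=b'\alpha_1$.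
   Context: Let $\{|q\rangle:q\in\mathbb{Z}_p\}$ be the computational basis of $\mathbb{C}^p$ and $X|q\rangle=|q+1\rangle$. For $\xi:\mathbb{Z}_p\to U(1)$ let $S_\xi=\mathrm{diag}(\xi(0),\dots,\xi(p-1))$. $T=\{S_\xi:\prod_{q}\xi(q)=1\}$ and $T_{(p^k)}=\{S\in T:S^{p^k}=\mathbbm{1}\}$. $K_Q(p)$ is the subgroup of $SU(p)$ generated by all $S_\xi X^b$ with $S_\xi\in Q$, $b\in\mathbb{Z}_p$. The commutator is $[A,B]=ABA^{-1}B^{-1}$. For $b\neq 0$, $b'/b$ denotes $b'b^{-1}\in\mathbb{Z}_p$, used as an exponent via a representative in $\{0,\dots,p-1\}$. *)

(* Defs.v *)
From HB Require Import structures.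
From mathcomp Require Import all_boot all_order all_algebra all_field.
Set Implicit Arguments. Unset Strict Implicit. Unset Printing Implicit Defensive.
Import Order.TTheory GRing.Theory Num.Theory.
Local Open Scope ring_scope.

(* omega = e^{2 pi i / p} in algC.  p.-root (-1) is the p-th root of -1 with
   non-negative imaginary part and maximal real part, i.e. e^{i pi / p};
   its square is e^{2 pi i / p}. *)
Definition omega (p : nat) : algC := (p.-root (-1)) ^+ 2.

(* matrix power for arbitrary (not necessarily n.+1) size *)
Definition mxpow (n : nat) (A : 'M[algC]_n) (k : nat) : 'M[algC]_n :=
  iter k (mulmx A) 1%:M.

Definition Xshift (p : nat) : 'M[algC]_p :=
  \matrix_(i < p, j < p) (((i : nat) == (j.+1 %% p)%N)%:R : algC).

Definition Sdiag (p : nat) (xi : 'I_p -> algC) : 'M[algC]_p :=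
  diag_mx (\row_(q < p) xi q).

(* xi : Z_p -> U(1) with S_xi in T_(p^k): unit modulus, product 1, S^{p^k} = 1 *)
Definition in_Tpk (p k : nat) (xi : 'I_p -> algC) : Prop :=
  (forall q, `|xi q| = 1) /\ (\prod_(q < p) xi q = 1) /\
  (forall q, xi q ^+ (p ^ k) = 1).

Definition commx (n : nat) (A B : 'M[algC]_n) : 'M[algC]_n :=
  A *m B *m invmx A *m invmx B.

(* b'/b in Z_p (p prime, b nonzero mod p), representative in {0,...,p-1}:
   b' * u mod p, where (egcdn b p).1 = u satisfies b*u = 1 mod p. *)
Definition zpdiv (p b' b : nat) : nat := (b' * (egcdn b p).1) %% p.

(* Main.v *)
From mathcomp Require Import all_boot all_order all_algebra all_field.
Require Import Defs.
From mathcomp Require Import zify ring lra.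
Import Order.TTheory GRing.Theory Num.Theory. Local Open Scope ring_scope.

Lemma unit_Re_le_m1 (y : algC) : `|y| = 1 -> 'Re y <= -1 -> y = -1.
Proof.
move=> ny hy.
have hR0 : 'Re y <= 0 by apply: le_trans hy _; rewrite lerN10.
have hle : 1 <= `|'Re y| by rewrite ler0_norm // lerNr.
have hL := leif_normC_Re_Creal y.
have e : `|'Re y| = `|y|.
  by apply/eqP; rewrite eq_le (hL : _ <= _) /= ny hle.
have yr : y \is Num.real by rewrite -(hL.2) e.
move/Creal_ReP: (yr) => yRe.
have y0 : y <= 0 by rewrite -yRe.
by move: ny; rewrite ler0_norm // => /eqP; rewrite eqr_oppLR => /eqP.
Qed.

Lemma omega_prim (p : nat) : prime p -> odd p -> p.-primitive_root (omega p).
Proof.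
move=> pP podd.
have p_gt1 := prime_gt1 pP.
have p_gt0 := prime_gt0 pP.
set r := p.-root (-1 : algC).
have rp : r ^+ p = -1 by rewrite /r rootCK.
have w1 : omega p ^+ p = 1 by rewrite /omega -exprM mulnC exprM rp sqrrN expr1n.
have wn1 : omega p != 1.
  apply/eqP; rewrite /omega -/r => /eqP; rewrite sqrf_eq1 => /orP[] /eqP r1.
    by move: rp; rewrite r1 expr1n => /eqP; rewrite -subr_eq0 opprK (@pnatr_eq0 _ 2).
  have key : forall y : algC, y ^+ p = -1 -> y ^+ 2 != 1 -> 0 <= 'Im y -> False.
    move=> y yp y2 yIm.
    have := rootC_Re_max p_gt0 yp yIm; rewrite -/r r1.
    have -> : 'Re (-1 : algC) = -1 by apply/Creal_ReP; rewrite rpredN1.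
    move=> hRe.
    have ny : `|y| = 1.
      apply/eqP; rewrite -(pexpr_eq1 p_gt0) ?normr_ge0 // -normrX yp normrN1 //.
    by move: y2; rewrite (@unit_Re_le_m1 y ny hRe) sqrrN expr1n eqxx.
  have [z zP] : {z : algC | (2 * p).-primitive_root z}.
    by apply: C_prim_root_exists; rewrite muln_gt0.
  have z2p : (z ^+ p) ^+ 2 = 1 by rewrite -exprM mulnC (prim_expr_order zP).
  have zp : z ^+ p = -1.
    move/eqP: z2p; rewrite sqrf_eq1 => /orP[] /eqP // h.
    move: (prim_order_dvd zP p); rewrite h eqxx.
    by rewrite -{2}(mul1n p) dvdn_pmul2r // .
  have z2 : z ^+ 2 != 1.
    rewrite -(prim_order_dvd zP); apply/negP => /(dvdn_leq (isT : (0 < 2)%N)).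
    move=> h; move: p_gt1; rewrite ltnNge; apply/negP; apply/negPn; lia.
  case/orP: (real_leVge (Creal_Im z) (rpred0 _ : (0 : algC) \is Num.real)) => hI.
    apply: (key z^*).
    - by rewrite -rmorphXn zp rmorphN1.
    - rewrite -rmorphXn; apply: contra z2 => /eqP h; by rewrite -[z ^+ 2]conjCK h rmorph1.
    - by rewrite Im_conj oppr_ge0.
  exact: (key z).
have [k kP kd] := prim_order_exists p_gt0 w1.
case/primeP: pP => _ /(_ k kd) /pred2P [] ek; last by rewrite ek in kP.
by move: (prim_expr_order kP) wn1; rewrite ek expr1 => ->; rewrite eqxx.
Qed.

Section Arith.
Variable n : nat.
Local Notation P := n.+2.

Lemma val_mulrn (x : 'I_P) t : val (x *+ t) = ((x * t) %% P)%N.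
Proof.
elim: t => [|t IH]; first by rewrite mulr0n muln0 mod0n.
by rewrite mulrS /= IH modnDmr mulnS.
Qed.

Lemma egcd_inv (b : 'I_P) : prime P -> (b : nat) != 0%N ->
  (((egcdn b P).1 * b) %% P = 1)%N.
Proof.
move=> pP b0.
have bgt0 : (0 < b)%N by rewrite lt0n.
case: egcdnP => // km kn e _ /=.
have g1 : gcdn b P = 1%N.
  apply/eqP; rewrite gcdnC -/(coprime P b) prime_coprime //.
  by apply/negP => /(dvdn_leq bgt0); rewrite leqNgt ltn_ord.
by rewrite e g1 modnMDl modn_small.
Qed.

Lemma mod0_add x y : (y %% P = 0 -> (x + y) %% P = x %% P)%N.
Proof. by move=> h; rewrite -modnDmr h addn0. Qed.

Lemma alg1 (F : fieldType) (w A E Y H Z X : F) : E != 0 -> H != 0 -> Z != 0 ->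
  X * Y = w * (A * Z) -> E * Z = X * H -> w * (A / E) = Y / H.
Proof.
move=> E0 H0 Z0 h1 h2; rewrite mulrA; apply/eqP; rewrite eqr_div //; apply/eqP.
apply: (mulIf Z0).
by rewrite -[RHS]mulrA h2 mulrA (mulrC Y) h1; ring.
Qed.

Lemma core (pP : prime P) (podd : odd P) (xi xi' : 'I_P -> algC) (b b' : 'I_P) (c k : nat) :
  (forall i, xi i != 0) -> (forall i, xi' i != 0) ->
  \prod_i xi i = 1 -> \prod_i xi' i = 1 ->
  (b : nat) != 0%N -> b *+ k = b' -> (c < P)%N ->
  (forall i, xi i * xi' (i - b) = omega P ^+ c * (xi' i * xi (i - b'))) ->
  exists alpha0 alpha1 : 'I_P,
   (forall i : 'I_P, xi' i = omega P ^+ (alpha0 + alpha1 * i) * \prod_(j < k) xi (i - b *+ j))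
   /\ ((c + b * alpha1) %% P = 0)%N.
Proof.
move=> xi0 xi'0 pxi pxi' b0 hb' hc hR.
set w := omega P.
have wP : P.-primitive_root w := omega_prim P pP podd.
have wp : w ^+ P = 1 := prim_expr_order wP.
set eta := fun i => \prod_(j < k) xi (i - b *+ j).
have eta0 : forall i, eta i != 0 by move=> i; apply/prodf_neq0 => j _.
have etaR : forall i, eta i * xi (i - b') = xi i * eta (i - b).
  move=> i; rewrite /eta -hb'.
  transitivity (\prod_(j < k.+1) xi (i - b *+ j)); first by rewrite big_ord_recr.
  rewrite big_ord_recl /= mulr0n subr0; congr (_ * _); apply: eq_bigr => j _.
  by rewrite mulrS opprD addrA.
set chi := fun i => xi' i / eta i.
have step : forall i, w ^+ c * chi (i + b) = chi i.
  move=> i; have h1 := hR (i + b); rewrite addrK in h1.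
  have h2 := etaR (i + b); rewrite addrK in h2.
  rewrite /chi; move: h1 h2; move=> h1' h2'; apply: (@alg1 _ _ _ _ _ _ _ _ _ _ _ h1' h2') => //.
have iter : forall t : nat, w ^+ (c * t) * chi (b *+ t) = chi 0.
  elim => [|t IH]; first by rewrite muln0 expr0 mul1r mulr0n.
  by rewrite mulnS exprD (mulrC (w ^+ c)) -mulrA mulrSr step.
set u := (egcdn b P).1.
have hu : ((u * b) %% P = 1)%N := egcd_inv b pP b0.
set d := (P - c)%N.
have chiq : forall q : 'I_P, chi q = w ^+ (d * (q * u)%N) * chi 0.
  move=> q.
  have eq : b *+ (q * u)%N = q.
    apply: val_inj; rewrite val_mulrn /= mulnCA (mulnC b u) -modnMmr hu muln1 modn_small //.
  rewrite -{1}eq -(iter (q * u)%N) mulrA -exprD -mulnDl addnC subnKC ?(ltnW hc) //.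
  by rewrite exprM wp expr1n mul1r.
have dP : (0 < P)%N by [].
pose a1 : 'I_P := Ordinal (ltn_pmod (d * u) dP).
have chiq' : forall q : 'I_P, chi q = w ^+ (a1 * q)%N * chi 0.
  move=> q; rewrite chiq; congr (_ * _).
  rewrite -(expr_mod _ wp) -[in RHS](expr_mod _ wp) /= modnMml.
  by rewrite mulnA mulnAC.
have heta : \prod_q eta q = 1.
  rewrite /eta exchange_big /= big1 // => j _.
  by rewrite -[RHS]pxi [RHS](reindex_inj (addIr (- (b *+ j)))).
have pchi : \prod_q chi q = 1 by rewrite /chi prodf_div pxi' heta divr1.
have chi0P : chi 0 ^+ P = 1.
  move: pchi; rewrite (eq_bigr _ (fun q _ => chiq' q)) big_split /= prodrXr prodr_const card_ord.
  rewrite -big_distrr /= -(big_mkord xpredT (fun i => i)) bin2_sum.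
  have hd : (P %| a1 * 'C(P, 2))%N.
    apply: dvdn_mull; apply: prime_dvd_bin => //.
    by case: n podd pP => [|n'].
  by rewrite -(expr_mod _ wp) (eqP hd) expr0 mul1r.
have [a0 ha0] := prim_rootP wP chi0P.
exists a0, a1; split.
  move=> i; have -> : xi' i = chi i * eta i by rewrite /chi divfK.
  by rewrite chiq' ha0 exprD (mulrC (w ^+ a0)).
rewrite /= -modnDmr modnMmr modnDmr mulnCA (mulnC b u).
rewrite -modnDmr -modnMmr hu muln1 modnDmr /d subnKC ?(ltnW hc) // modnn.
by [].
Qed.
End Arith.
Arguments core {n}. Arguments egcd_inv {n}. Arguments mod0_add {n}.

Section MM.
Variable n : nat.
Local Notation P := n.+2.
Definition MM (f : 'I_P -> algC) (s : 'I_P) : 'M[algC]_P :=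
  \matrix_(i, j) (f i * (i == j + s)%:R).

Lemma MM_ext f g s : (forall i, f i = g i) -> MM f s = MM g s.
Proof. by move=> h; apply/matrixP => i j; rewrite !mxE h. Qed.

Lemma MM_mul f g s t :
  MM f s *m MM g t = MM (fun i => f i * g (i - s)) (s + t).
Proof.
apply/matrixP => i j; rewrite !mxE (bigD1 (i - s)) //= big1 ?addr0.
  rewrite !mxE subrK eqxx mulr1 -mulrA; congr (_ * _).
  by rewrite (addrC s) addrA (can2_eq (subrK s) (addrK s)).
move=> k hk; rewrite !mxE.
have -> : (i == k + s) = false.
  by apply/negbTE; apply: contra hk => /eqP ->; rewrite addrK.
by rewrite mulr0 mul0r.
Qed.

Lemma MM1 : MM (fun _ => 1) 0 = 1%:M.
Proof. by apply/matrixP => i j; rewrite !mxE addr0 mul1r. Qed.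

Lemma MM_scalar a : a%:M = MM (fun _ => a) 0.
Proof. by apply/matrixP => i j; rewrite !mxE addr0 mulr_natr. Qed.

Lemma Sdiag_MM f : Sdiag f = MM f 0.
Proof. by apply/matrixP => i j; rewrite !mxE addr0 mulr_natr eq_sym. Qed.

Lemma Xshift_MM : Xshift P = MM (fun _ => 1) 1.
Proof.
apply/matrixP => i j; rewrite !mxE mul1r; congr (_ %:R).
rewrite -val_eqE /= modnDmr addn1 //.
Qed.

Lemma mxpow_MM f s k :
  mxpow (MM f s) k = MM (fun i => \prod_(j < k) f (i - s *+ j)) (s *+ k).
Proof.
elim: k => [|k IH]; first by rewrite /mxpow /= -MM1; apply: MM_ext => i; rewrite big_ord0.
rewrite /mxpow iterS -/(mxpow _ _) IH MM_mul -mulrS; apply: MM_ext => i.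
rewrite big_ord_recl /= subr0; congr (_ * _); apply: eq_bigr => j _.
by rewrite -addrA -opprD -mulrS.
Qed.
End MM.
Arguments MM {n}.

Section Main.
Variable n : nat.
Local Notation P := n.+2.

Lemma MM_eq (f g : 'I_P -> algC) s t : (forall i, f i != 0) -> MM f s = MM g t ->
  s = t /\ forall i, f i = g i.
Proof.
move=> f0 e.
have h : forall i, f i = g i * (i == i - s + t)%:R.
  by move=> i; have := congr1 (fun A : 'M[algC]_P => A i (i - s)) e; rewrite !mxE subrK eqxx mulr1.
have st : s = t.
  apply/eqP; apply: contraT => hst; move: (h 0) (f0 0) => ->.
  have -> : (0 == 0 - s + t) = false.
    apply/negbTE; apply: contra hst => /eqP h0.
    by rewrite sub0r addrC in h0; rewrite eq_sym -subr_eq0 -h0.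
  by rewrite mulr0 eqxx.
by split => // i; rewrite h st subrK eqxx mulr1.
Qed.

Lemma MM_unit (f : 'I_P -> algC) s : (forall i, f i != 0) -> MM f s \in unitmx.
Proof.
move=> f0.
have e : MM f s *m MM (fun i => (f (i + s))^-1) (-s) = 1%:M.
  rewrite MM_mul subrr -MM1; apply: MM_ext => i; by rewrite subrK mulfV.
by case: (mulmx1_unit e).
Qed.

Lemma M_MM (xi : 'I_P -> algC) (b : 'I_P) : Sdiag xi *m mxpow (Xshift P) b = MM xi b.
Proof.
rewrite Sdiag_MM Xshift_MM mxpow_MM MM_mul add0r natr_Zp; apply: MM_ext => i.
by rewrite big1 ?mulr1.
Qed.
End Main.
Arguments MM_eq {n}. Arguments MM_unit {n}.

Theorem corollary2 (p m : nat) (pP : prime p) (p_odd : odd p) (m_ge1 : (1 <= m)%N)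
    (xi xi' : 'I_p -> algC) (b b' c : 'I_p) :
  in_Tpk m xi -> in_Tpk m xi' ->
  let M := Sdiag xi *m mxpow (Xshift p) b in
  let M' := Sdiag xi' *m mxpow (Xshift p) b' in
  commx M M' = (omega p ^+ c)%:M ->
  [/\ ((b : nat) = 0%N -> (b' : nat) = 0%N -> (c : nat) = 0%N),
      ((b : nat) != 0%N ->
        exists alpha0' alpha1' : 'I_p,
          M' = Sdiag (fun q : 'I_p => omega p ^+ (alpha0' + alpha1' * q)%N)
                 *m mxpow M (zpdiv p b' b)
          /\ ((c + b * alpha1') %% p = 0)%N) &
      ((b' : nat) != 0%N ->
        exists alpha0 alpha1 : 'I_p,
          M = Sdiag (fun q : 'I_p => omega p ^+ (alpha0 + alpha1 * q)%N)
                *m mxpow M' (zpdiv p b b')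
          /\ (c : nat) = ((b' * alpha1) %% p)%N)].
Proof.
move: p pP p_odd m_ge1 xi xi' b b' c; case=> [|[|n]]; [by []|by []|].
move=> pP podd _ xi xi' b b' c hT hT' M M' hC.
have nz : forall f : 'I_n.+2 -> algC, in_Tpk m f -> forall i, f i != 0.
  move=> f [hn _] i; apply/eqP => h; move: (hn i); rewrite h normr0 => /eqP.
  by rewrite eq_sym oner_eq0.
have xi0 := nz _ hT; have xi'0 := nz _ hT'.
have pxi : \prod_i xi i = 1 by case: hT => _ [].
have pxi' : \prod_i xi' i = 1 by case: hT' => _ [].
have eM : M = MM xi b by rewrite /M M_MM.
have eM' : M' = MM xi' b' by rewrite /M' M_MM.
have uM : M \in unitmx by rewrite eM MM_unit.
have uM' : M' \in unitmx by rewrite eM' MM_unit.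
set w := omega n.+2.
have wP : (n.+2).-primitive_root w := omega_prim _ pP podd.
have wp : w ^+ n.+2 = 1 := prim_expr_order wP.
have comm : M *m M' = MM (fun _ => w ^+ c) 0 *m M' *m M.
  by rewrite -MM_scalar -hC /commx (mulmxKV uM') (mulmxKV uM).
rewrite [in LHS]eM [in LHS]eM' [in RHS]eM [in RHS]eM' !MM_mul in comm.
have [_ hrel] := MM_eq _ _ _ _ (fun i => mulf_neq0 (xi0 i) (xi'0 (i - b))) comm.
have R : forall i, xi i * xi' (i - b) = w ^+ c * (xi' i * xi (i - b')).
  by move=> i; rewrite hrel subr0 add0r mulrA.
split.
- move=> hb hb'.
  have b0 : b = 0 by apply: val_inj.
  have b'0 : b' = 0 by apply: val_inj.
  have := R 0; rewrite b0 b'0 !subr0 (mulrC (xi' 0)) -{1}(mul1r (xi 0 * _)).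
  move/(mulIf (mulf_neq0 (xi0 0) (xi'0 0))) => /esym/eqP.
  rewrite -(prim_order_dvd wP) => /dvdnP [q hq].
  move: (ltn_ord c); rewrite hq; case: q {hq} => //= q; lia.
- move=> b0.
  set k := zpdiv n.+2 b' b.
  have hk : b *+ k = b'.
    apply: val_inj; rewrite val_mulrn /k /zpdiv modnMmr mulnCA (mulnC b).
    by rewrite -modnMmr (egcd_inv b pP b0) muln1 modn_small.
  have [a0 [a1 [h1 h2]]] := core pP podd _ _ _ _ _ _ xi0 xi'0 pxi pxi' b0 hk (ltn_ord c) R.
  exists a0, a1; split => //.
  rewrite eM' eM mxpow_MM Sdiag_MM MM_mul add0r hk; apply: MM_ext => i.
  by rewrite subr0 h1.
- move=> b0.
  set c' := ((n.+2 - c) %% n.+2)%N.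
  have hcc : ((c' + c) %% n.+2 = 0)%N by rewrite /c' modnDml subnK ?(ltnW (ltn_ord c)) // modnn.
  have R' : forall i, xi' i * xi (i - b') = w ^+ c' * (xi i * xi' (i - b)).
    move=> i; rewrite R mulrA -exprD -(expr_mod _ wp) hcc expr0 mul1r.
    by rewrite mulrC.
  set k := zpdiv n.+2 b b'.
  have hk : b' *+ k = b.
    apply: val_inj; rewrite val_mulrn /k /zpdiv modnMmr mulnCA (mulnC b').
    by rewrite -modnMmr (egcd_inv b' pP b0) muln1 modn_small.
  have hc' : (c' < n.+2)%N by rewrite ltn_pmod.
  have [a0 [a1 [h1 h2]]] := core pP podd _ _ _ _ _ _ xi'0 xi0 pxi' pxi b0 hk hc' R'.
  exists a0, a1; split.
    rewrite eM eM' mxpow_MM Sdiag_MM MM_mul add0r hk; apply: MM_ext => i.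
    by rewrite subr0 h1.
  rewrite -(mod0_add (b' * a1)%N _ hcc) addnA (addnC (b' * a1)%N c') -modnDml h2 add0n modn_small //.
Qed.
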